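(* Assume $\sigma_1(x)=\tfrac12\sigma_1''(0)\,x(x-a_1)$ and $\sigma_2(x)=\tfrac12\sigma_2''(0)\,x(x-a_2)$ with $\sigma_1''(0)\ne0$, $\sigma_2''(0)\ne0$ and real $0<a_2<a_1$. Let $\Lambda_q=q^{-2}\Big[1+\frac{(1-q^{-1})\tau'(0)}{\frac12\sigma_1''(0)}\Big]$ and $y_0=q^{-1}\Big[1-\frac{(1-q^{-1})}{a_1}\frac{\tau(0)}{\frac12\sigma_1''(0)}\Big]$, and assume $qy_0<0$ and $q^2\Lambda_q<0$. Put $a=a_2$, $b=q^{-1}a_1$, and suppose $q^{-N-1}a=b$ for some $N\in\mathbb{N}_0$. Let $$\rho(x)=|x|^{\alpha}\sqrt{x^{\log_qx-1}}\,(qa/x,\,x/b;q)_\infty,\qquad q^{\alpha}=-\frac{q^{-3}\sigma_2''(0)}{\sigma_1''(0)b}.$$ Then there exist polynomials $P_0,\dots,P_N$, with $P_n$ of degree $n$ a solution of the q-EHT with $\lambda=\lambda_n$, and nonzero constants $d_n^2$, such that for $m,n\in\{0,\dots,N\}$ $$\int_a^{b}P_n(x)P_m(x)\rho(x)\,d_{q^{-1}}x=d_n^2\delta_{mn},$$ i.e. orthogonality with respect to $\rho$ supported on $\{q^{-k}a\}_{k=0}^N$.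
   Context: Throughout $0<q<1$. For a function $y$ and $\zeta\in\{q,q^{-1}\}$, $D_\zeta y(x)=\frac{y(x)-y(\zeta x)}{(1-\zeta)x}$ for $x\ne0$ and $D_\zeta y(0)=y'(0)$; $[n]_q=\frac{1-q^n}{1-q}$. Let $\sigma_1$ be a real polynomial of degree at most two, $\tau(x)=\tau'(0)x+\tau(0)$ a real polynomial with $\tau'(0)\ne0$, and $\sigma_2(x):=q[\sigma_1(x)+(1-q^{-1})x\tau(x)]$. The q-EHT with parameter $n$ is $\sigma_1(x)D_{q^{-1}}D_qy(x)+\tau(x)D_qy(x)+\lambda_ny(x)=0$, $\lambda_n=-[n]_q\big(\tau'(0)+\tfrac12[n-1]_{q^{-1}}\sigma_1''(0)\big)$. $(\beta;q)_\infty=\prod_{k\ge0}(1-\beta q^k)$, $(\beta_1,\dots,\beta_r;q)_\infty=\prod_i(\beta_i;q)_\infty$. For $q^\alpha=c$ ($c\ne0$), $\alpha$ is any complex number with $e^{\alpha\ln q}=c$ and $|x|^\alpha:=e^{\alpha\ln|x|}$; for $x>0$, $\sqrt{x^{\log_qx-1}}:=\exp\big(\tfrac12(\log_qx-1)\ln x\big)$. For $a>0$ and $b=q^{-N-1}a$, $\int_a^{b}f(x)\,d_{q^{-1}}x=(q^{-1}-1)a\sum_{k=0}^{N}q^{-k}f(q^{-k}a)$. *)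

(* Defs.v *)
From HB Require Import structures.
From mathcomp Require Import all_boot all_order all_algebra.
From mathcomp Require Import all_classical all_reals all_analysis.
From mathcomp Require Import complex.
Set Implicit Arguments. Unset Strict Implicit. Unset Printing Implicit Defensive.
Import Order.TTheory GRing.Theory Num.Theory.
Local Open Scope ring_scope.

Section QEHT.
Variable R : realType.

Definition qD (zeta : R) (y : R -> R) (x : R) : R :=
  if x != 0 then (y x - y (zeta * x)) / ((1 - zeta) * x) else derive1 y 0.

Definition qnum (q : R) (n : int) : R := (1 - q ^ n) / (1 - q).

(* sigma_1(x) = 1/2 sigma_1''(0) x (x - a1), with s1 = sigma_1''(0) *)
Definition sigma1 (s1 a1 : R) (x : R) : R := s1 / 2 * x * (x - a1).
(* tau(x) = tau'(0) x + tau(0), with t1 = tau'(0), t0 = tau(0) *)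
Definition tau (t0 t1 : R) (x : R) : R := t1 * x + t0.
Definition sigma2 (q s1 a1 t0 t1 : R) (x : R) : R :=
  q * (sigma1 s1 a1 x + (1 - q^-1) * x * tau t0 t1 x).

Definition lambda (q s1 t1 : R) (n : nat) : R :=
  - qnum q n%:Z * (t1 + 1 / 2 * qnum q^-1 (n%:Z - 1) * s1).

Definition qEHT (q s1 a1 t0 t1 : R) (n : nat) (y : R -> R) : Prop :=
  forall x : R, sigma1 s1 a1 x * qD q^-1 (qD q y) x + tau t0 t1 x * qD q y x
                + lambda q s1 t1 n * y x = 0.

Definition qpoch_inf (beta q : R) : R :=
  limn (fun n : nat => \prod_(k < n) (1 - beta * q ^+ k)).

Local Open Scope complex_scope.
Definition cexpR (z : R[i]) : R[i] :=
  (expR (complex.Re z) * cos (complex.Im z)) +i* (expR (complex.Re z) * sin (complex.Im z)).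
Definition cpow_abs (x : R) (alpha : R[i]) : R[i] :=
  cexpR (alpha * (ln `|x|)%:C).
Local Close Scope complex_scope.

Definition sqrt_qpow (q x : R) : R :=
  expR (1 / 2 * (ln x / ln q - 1) * ln x).

Definition rho (q a b : R) (alpha : R[i]) (x : R) : R[i] :=
  (cpow_abs x alpha * (sqrt_qpow q x * qpoch_inf (q * a / x) q
                        * qpoch_inf (x / b) q)%:C)%C.

(* Jackson integral int_a^b f(x) d_{q^{-1}} x for b = q^{-N-1} a:
   (q^{-1} - 1) a sum_{k=0}^N q^{-k} f(q^{-k} a). *)
Definition jackson_qinv (q a : R) (N : nat) (f : R -> R[i]) : R[i] :=
  (((q^-1 - 1) * a)%:C * \sum_(k < N.+1) ((q ^- k)%:C * f (q ^- k * a)))%C.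

End QEHT.

(* Main.v *)
Require Import Defs.
From HB Require Import structures.
From mathcomp Require Import all_boot all_order all_algebra.
From mathcomp Require Import all_classical all_reals all_analysis.
From mathcomp Require Import complex.
From mathcomp Require Import ring lra zify.
Import Order.TTheory GRing.Theory Num.Theory.
Import numFieldNormedType.Exports.
Local Open Scope ring_scope.
Local Open Scope complex_scope.
Section P1.
Variable R : realType.

Definition Dqp (z : R) (p : {poly R}) : {poly R} :=
  \poly_(i < size p) (p`_i.+1 * qnum z (i.+1)%:Z).

Lemma coef_Dqp z p j : (Dqp z p)`_j = p`_j.+1 * qnum z (j.+1)%:Z.
Proof.
rewrite coef_poly; case: ifP => // /negbT; rewrite -leqNgt => H.
by rewrite nth_default ?mul0r //; apply: leq_trans H (leqnSn _).
Qed.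

Lemma qD_poly z p : z != 1 -> qD z (horner p) = horner (Dqp z p).
Proof.
move=> z1; apply/funext => x; rewrite /qD.
have z10 : 1 - z != 0 by rewrite subr_eq0 eq_sym.
case: (eqVneq x 0) => [->|x0] /=; last first.
  apply: (@mulIf _ ((1 - z) * x)); first by rewrite mulf_neq0.
  rewrite divfK ?mulf_neq0 //.
  rewrite (@horner_coef_wide _ (size p).+1 p) // (@horner_coef_wide _ (size p).+1 p) //.
  rewrite (@horner_coef_wide _ (size p) (Dqp z p)) ?size_poly //.
  rewrite -sumrB big_ord_recl /= !expr0 subrr add0r mulr_suml.
  apply: eq_bigr => i _; rewrite coef_Dqp /qnum /= /bump /= add1n.
  rewrite exprMn; change (z ^ i.+1) with (z ^+ i.+1); rewrite exprS; field; done.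
rewrite -derivE !horner_coef0 coef_deriv coef_Dqp /qnum /=.
rewrite expr1z divff //.
by rewrite mulr1 mulr1n.
Qed.

End P1.
Arguments Dqp {R}.
Arguments qD_poly {R}.
Arguments coef_Dqp {R}.
Section P2.
Variable R : realType.

Definition nu (q s1 a1 t0 : R) (j : nat) : R :=
  qnum q j%:Z * (t0 - a1 * (s1 / 2) * qnum q^-1 (j.-1)%:Z).

Lemma qnum0 (z : R) : qnum z 0 = 0.
Proof. by rewrite /qnum expr0z subrr mul0r. Qed.

Lemma intSm1 (k : nat) : (k.+1%:Z - 1 = k%:Z)%R.
Proof. lia. Qed.

Lemma qEHT_poly (q s1 a1 t0 t1 : R) n (p : {poly R}) : q != 0 -> q != 1 ->
  (forall i, (lambda q s1 t1 n - lambda q s1 t1 i) * p`_i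
             + nu q s1 a1 t0 i.+1 * p`_i.+1 = 0) ->
  qEHT q s1 a1 t0 t1 n (fun x => p.[x]).
Proof.
move=> q0 q1 H x.
have qi1 : q^-1 != 1 by apply: contraNneq q1 => /(congr1 GRing.inv); rewrite invrK invr1 => ->.
change (fun x => p.[x]) with (horner p).
rewrite (qD_poly q p q1) (qD_poly q^-1 _ qi1).
set D1 := Dqp q p; set D2 := Dqp q^-1 D1.
pose E := (s1/2) *: (D2 * 'X * 'X) - (s1/2*a1) *: (D2 * 'X) + t1 *: (D1 * 'X)
   + t0 *: D1 + lambda q s1 t1 n *: p.
have -> : sigma1 s1 a1 x * D2.[x] + tau t0 t1 x * D1.[x] + lambda q s1 t1 n * p.[x] = E.[x].
  by rewrite /E !(hornerD, hornerN, hornerZ, hornerMX) /sigma1 /tau; ring.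
suff -> : E = 0 by rewrite horner0.
apply/polyP => i; rewrite coef0 /E !coefD !coefN !coefZ !coefMX.
rewrite /D2 /D1 !coef_Dqp.
have := H i; rewrite /lambda /nu.
case: i => [|[|k]] /=.
- rewrite !qnum0. move=> Hi; rewrite -[RHS]Hi; ring.
- rewrite !qnum0. move=> Hi; rewrite -[RHS]Hi; ring.
- rewrite !intSm1. move=> Hi; rewrite -[RHS]Hi; ring.
Qed.

End P2.
Arguments nu {R}.
Arguments qEHT_poly {R}.
Section P3.
Variable R : realType.

Lemma qinv_pow (q : R) (i : nat) : q != 0 -> q^-1 ^ (i%:Z - 1) = q / q ^+ i.
Proof.
move=> q0.
rewrite exprzDr ?unitfE ?invr_eq0 // exprN1 invrK.
change (q^-1 ^ i%:Z) with (q^-1 ^+ i); rewrite exprVn mulrC.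
done.
Qed.

Lemma lambda_form (q s1 t1 : R) i : q != 0 ->
  lambda q s1 t1 i = - ((1 - q ^+ i) / (1 - q)) *
     (t1 + 1 / 2 * ((1 - q / q ^+ i) / (1 - q^-1)) * s1).
Proof. by move=> q0; rewrite /lambda /qnum qinv_pow. Qed.

Lemma lambda_neq (q s1 t1 : R) i n : 0 < q -> q < 1 -> s1 != 0 ->
  1 + (1 - q^-1) * t1 / (s1 / 2) < 0 -> i != n ->
  lambda q s1 t1 i != lambda q s1 t1 n.
Proof.
move=> q0 q1 s10 HM inn.
have q0' : q != 0 by rewrite gt_eqF.
have q1' : 1 - q != 0 by rewrite subr_eq0 eq_sym lt_eqF.
have qi1 : 1 - q^-1 != 0.
  rewrite subr_eq0 eq_sym; apply: contraTneq q1 => /(congr1 GRing.inv).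
  by rewrite invrK invr1 => ->; rewrite ltxx.
set M := 1 + (1 - q^-1) * t1 / (s1 / 2) in HM.
rewrite !lambda_form //.
set r := q ^+ i; set s := q ^+ n.
have r0 : 0 < r by rewrite exprn_gt0.
have s0 : 0 < s by rewrite exprn_gt0.
have rs : r != s.
  by apply: contra inn => /eqP /(ieexprIn q0 (negbT (lt_eqF q1))) ->.
rewrite -subr_eq0.
have -> : - ((1 - r) / (1 - q)) * (t1 + 1 / 2 * ((1 - q / r) / (1 - q^-1)) * s1) -
  - ((1 - s) / (1 - q)) * (t1 + 1 / 2 * ((1 - q / s) / (1 - q^-1)) * s1)
  = (s1 / 2) * q * (q - M * r * s) * (r - s) / (r * s * (1 - q) ^+ 2).
  rewrite /M; field.
  by rewrite q1' q0' s10 (gt_eqF r0) (gt_eqF s0) subr_eq0 (lt_eqF q1).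
have hM : 0 < q - M * r * s.
  rewrite subr_gt0; apply: (lt_trans _ q0).
  by rewrite -mulrA nmulr_rlt0 // mulr_gt0.
rewrite !mulf_eq0 !negb_or !invr_eq0 !mulf_eq0 !negb_or.
by rewrite s10 q0' q1' (gt_eqF r0) (gt_eqF s0) (gt_eqF hM) subr_eq0 rs pnatr_eq0.
Qed.

End P3.
Arguments lambda_neq {R}.
Section P4.
Variable R : realType.
Variables (q s1 a1 t0 t1 : R).

Fixpoint cc (n k : nat) : R :=
  match k with
  | 0 => 1
  | k'.+1 => nu q s1 a1 t0 (n - k') * cc n k' /
             (lambda q s1 t1 (n - k'.+1) - lambda q s1 t1 n)
  end.

Definition Pn (n : nat) : {poly R} := \poly_(i < n.+1) cc n (n - i).

Lemma size_Pn n : size (Pn n) = n.+1.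
Proof. by rewrite size_poly_eq //= subnn oner_neq0. Qed.

Lemma Pn_cond n : (forall i, (i < n)%N -> lambda q s1 t1 i != lambda q s1 t1 n) ->
  forall i, (lambda q s1 t1 n - lambda q s1 t1 i) * (Pn n)`_i
             + nu q s1 a1 t0 i.+1 * (Pn n)`_i.+1 = 0.
Proof.
move=> Hl i; rewrite /Pn !coef_poly.
case: (ltngtP i n) => [lin|nli|->].
- rewrite !ltnS (ltnW lin) lin.
  have -> : (n - i = (n - i.+1).+1)%N by lia.
  rewrite /= (_ : (n - (n - i.+1))%N = i.+1); last by lia.
  rewrite (_ : (n - (n - i.+1).+1)%N = i); last by lia.
  have := Hl i lin; rewrite -subr_eq0 => H.
  field; done.
- by rewrite !ltnS leqNgt nli /= leqNgt ltnS (ltnW nli) /= !mulr0 addr0.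
- by rewrite ltnn ltnSn subrr !mul0r mulr0 addr0.
Qed.

End P4.
Arguments Pn {R}.
Section P5.
Variable R : realType.
Variable q : R.
Hypothesis q0 : 0 < q.
Hypothesis q1 : q < 1.

Definition pp (b : R) (n : nat) : R := \prod_(k < n) (1 - b * q ^+ k).

Lemma pp_ge0 (b : R) n : 0 <= b -> b < 1 -> 0 < pp b n.
Proof.
move=> b0 b1; rewrite /pp; apply: prodr_gt0 => k _.
rewrite subr_gt0; apply: le_lt_trans b1.
by rewrite ler_piMr // exprn_ile1 // ltW.
Qed.

Lemma ppS (b : R) n : pp b n.+1 = pp b n * (1 - b * q ^+ n).
Proof. by rewrite /pp big_ord_recr. Qed.

Lemma ppS' b n : pp b n.+1 = (1 - b) * pp (b * q) n.
Proof.
rewrite /pp big_ord_recl expr0 mulr1; congr (_ * _).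
by apply: eq_bigr => i _; rewrite exprS mulrA.
Qed.

Lemma pp_cvg (b : R) : 0 <= b -> b < 1 -> cvgn (pp b).
Proof.
move=> b0 b1.
apply: cvgP; apply: nonincreasing_cvgn.
  apply/nonincreasing_seqP => n; rewrite ppS ger_pMr ?pp_ge0 //.
  by rewrite gerBl mulr_ge0 // exprn_ge0 // ltW.
by exists 0 => _ [n _ <-]; apply: ltW; apply: pp_ge0.
Qed.

Lemma qpoch_shift (b : R) : 0 <= b * q -> b * q < 1 ->
  qpoch_inf b q = (1 - b) * qpoch_inf (b * q) q.
Proof.
move=> b0 b1.
have c := pp_cvg _ b0 b1.
rewrite /qpoch_inf.
apply: cvg_lim => //.
rewrite -cvg_shiftS /=.
have -> : (fun n : nat => \prod_(k < n.+1) (1 - b * q ^+ k))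
   = (fun n => (1 - b) * pp (b * q) n).
  by apply/funext => n; rewrite -ppS'.
exact: cvgMl_tmp.
Qed.

End P5.
Arguments pp {R}.
Section P6.
Variable R : realType.
Variable q : R.
Hypothesis q0 : 0 < q.
Hypothesis q1 : q < 1.

Lemma exists_small : exists K : nat, q ^+ K <= (1 - q) / 2.
Proof.
have e0 : 0 < (1 - q) / 2 by rewrite divr_gt0 // subr_gt0.
have : `|q| < 1 by rewrite ger0_norm // (ltW q0).
move/cvg_expr/cvgr0Pnorm_lt => /(_ _ e0) [K _ HK].
exists K; have := HK K (leqnn K) => /=.
rewrite ger0_norm ?exprn_ge0 ?(ltW q0) //; exact: ltW.
Qed.

Lemma pp_tail (b : R) K j : 0 <= b -> b < 1 ->
  pp q b K * (1 - b * q ^+ K * (1 - q ^+ j) / (1 - q)) <= pp q b (K + j).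
Proof.
move=> b0 b1; elim: j => [|j IH].
  by rewrite expr0 subrr mulr0 mul0r subr0 mulr1 addn0.
rewrite addnS ppS.
have u0 : 0 <= pp q b K by apply: ltW; apply: pp_ge0.
set A := 1 - b * q ^+ K * (1 - q ^+ j) / (1 - q) in IH.
set a := b * q ^+ (K + j).
have a0 : 0 <= a by rewrite mulr_ge0 // exprn_ge0 // ltW.
have a1 : a <= 1.
  by rewrite /a; apply: le_trans (ltW b1); rewrite ler_piMr // exprn_ile1 // ltW.
have A1 : A <= 1.
  rewrite /A gerBl; apply: divr_ge0; last by rewrite subr_ge0 ltW.
  apply: mulr_ge0; first by apply: mulr_ge0 => //; rewrite exprn_ge0 // ltW.
  by rewrite subr_ge0 exprn_ile1 // ltW.
have -> : 1 - b * q ^+ K * (1 - q ^+ j.+1) / (1 - q) = A - a.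
  rewrite /A /a exprD exprS; field.
  by rewrite subr_eq0 eq_sym lt_eqF.
apply: le_trans (_ : pp q b K * A * (1 - a) <= _).
  rewrite -mulrA ler_wpM2l //.
  nra.
by rewrite ler_wpM2r // subr_ge0.
Qed.

Lemma qpoch_gt0 (b : R) : 0 <= b -> b < 1 -> 0 < qpoch_inf b q.
Proof.
move=> b0 b1.
have [K HK] := exists_small.
have uK : 0 < pp q b K by apply: pp_ge0.
have Hlb : forall n, pp q b K / 2 <= pp q b n.
  move=> n; case: (leqP K n) => [Kn|nK].
    rewrite -(subnKC Kn); apply: le_trans (pp_tail b K (n - K) b0 b1).
    rewrite ler_pM2l //.
    have : b * q ^+ K * (1 - q ^+ (n - K)) / (1 - q) <= 1 / 2.
      rewrite ler_pdivrMr ?subr_gt0 //.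
      apply: le_trans (_ : q ^+ K <= _); last by lra.
      have : 0 <= q ^+ K by rewrite exprn_ge0 // ltW.
      have : 0 <= q ^+ (n - K) by rewrite exprn_ge0 // ltW.
      have : q ^+ (n - K) <= 1 by rewrite exprn_ile1 // ltW.
      move=> h1 h2 h3; have hb : b * (1 - q ^+ (n - K)) <= 1 by nra.
      nra.
    by move=> *; lra.
  have : nonincreasing_seq (pp q b).
    by apply/nonincreasing_seqP => m; rewrite ppS ger_pMr ?pp_ge0 // gerBl mulr_ge0 // exprn_ge0 // ltW.
  move=> /(_ n K (ltnW nK)) => h; apply: le_trans h; lra.
apply: lt_le_trans (_ : pp q b K / 2 <= _); first by rewrite divr_gt0.
rewrite /qpoch_inf; apply: limr_ge; first exact: pp_cvg.
by apply: nearW => n; apply: Hlb.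
Qed.

End P6.
Section P7.
Variable R : realType.
Local Open Scope complex_scope.

Lemma cexpRD (z w : R[i]) : cexpR (z + w) = cexpR z * cexpR w.
Proof.
case: z => a b; case: w => c d; rewrite /cexpR /=.
rewrite expRD cosD sinD; congr (_ +i* _); ring.
Qed.

Lemma cexpR0 : cexpR (0 : R[i]) = 1.
Proof. by rewrite /cexpR /= expR0 cos0 sin0 !mul1r. Qed.

Lemma cexpRN (z : R[i]) : cexpR (- z) * cexpR z = 1.
Proof. by rewrite -cexpRD addNr cexpR0. Qed.

Lemma cexpR_neq0 (z : R[i]) : cexpR z != 0.
Proof.
apply/negP => /eqP H; have := cexpRN z; rewrite H mulr0 => /eqP.
by rewrite eq_sym oner_eq0.
Qed.

End P7.
Arguments cexpRD {R}.
Arguments cexpRN {R}.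
Arguments cexpR_neq0 {R}.
Section Tele.
Variable R : realType.

Lemma tele (N : nat) (v a c F G H : nat -> R) :
  c 0%N = 0 -> a N = 0 -> (forall k, (k < N)%N -> v k * a k = v k.+1 * c k.+1) ->
  (forall k, G k.+1 = F k) ->
  \sum_(k < N.+1) v k * (a k * (F k.+1 - F k) + c k * (G k - F k)) * H k
  = - \sum_(k < N) v k * a k * (F k.+1 - F k) * (H k.+1 - H k).
Proof.
move=> c0 aN hb hG.
rewrite (eq_bigr (fun k : 'I_N.+1 => v k * a k * (F k.+1 - F k) * H k
          + v k * c k * (G k - F k) * H k)); last by move=> i _; ring.
rewrite big_split /=.
rewrite big_ord_recr /= aN mulr0 !mul0r addr0.
rewrite big_ord_recl /= c0 mulr0 !mul0r add0r.
rewrite -sumrN -big_split /=; apply: eq_bigr => i _.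
rewrite /bump /= add1n hG -hb //; ring.
Qed.

End Tele.
Arguments tele {R}.
Section G.
Variable R : realType.
Variables (q s1 a1 t0 t1 s2 a2 : R) (N : nat) (alpha : R[i]).
Hypothesis q0 : 0 < q.
Hypothesis q1 : q < 1.
Hypothesis s10 : s1 != 0.
Hypothesis s20 : s2 != 0.
Hypothesis Hs2 : forall x, sigma2 q s1 a1 t0 t1 x = s2 / 2 * x * (x - a2).
Hypothesis a20 : 0 < a2.
Hypothesis Ha12 : a2 < a1.
Hypothesis HM : 1 + (1 - q^-1) * t1 / (s1 / 2) < 0.
Hypothesis HN : q ^- N.+1 * a2 = q^-1 * a1.
Definition c := - (q ^- 3 * s2) / (s1 * (q^-1 * a1)).
Hypothesis Hc : cexpR (alpha * (ln q)%:C)%C = c%:C.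

Definition xk k := q ^- k * a2.
Definition vk k := q ^- k * c ^- k * sqrt_qpow q (xk k)
   * qpoch_inf (q ^+ k.+1) q * qpoch_inf (q ^+ (N.+1 - k)) q.

Let q0' : q != 0. Proof. by rewrite gt_eqF. Qed.
Let q1' : 1 - q != 0. Proof. by rewrite subr_eq0 eq_sym lt_eqF. Qed.

Lemma xk_pos k : 0 < xk k.
Proof. by rewrite /xk mulr_gt0 // invr_gt0 exprn_gt0. Qed.

Lemma xkS k : q^-1 * xk k = xk k.+1.
Proof. by rewrite /xk exprS invfM mulrA [q^-1 * _]mulrC. Qed.

Lemma xkS' k : q * xk k.+1 = xk k.
Proof. by rewrite -xkS mulrA (mulfV q0') mul1r. Qed.

Lemma xkN : xk N = a1.
Proof.
have := congr1 (fun y => q * y) HN => /=.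
rewrite [X in _ = X]mulrA (mulfV q0') mul1r => <-.
by rewrite /xk exprS; field; rewrite q0' expf_neq0.
Qed.

Lemma qa_over k : q * a2 / xk k = q ^+ k.+1.
Proof. by rewrite /xk invfM invrK exprS; field; rewrite gt_eqF. Qed.

Lemma over_b k : (k <= N)%N -> xk k / (q^-1 * a1) = q ^+ (N.+1 - k).
Proof.
move=> kN; rewrite -HN expfB ?ltnS //.
rewrite /xk; field.
by apply/and3P; split; [exact: expf_neq0|exact: expf_neq0|by rewrite gt_eqF].
Qed.

Lemma c_pos : 0 < c.
Proof.
have e1 := Hs2 1; have e2 := Hs2 (-1).
have hs2 : s2 = sigma2 q s1 a1 t0 t1 1 + sigma2 q s1 a1 t0 t1 (-1).
  by rewrite e1 e2; field.
have a10 : 0 < a1 by apply: lt_trans Ha12.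
have HM' := HM.
set M := 1 + (1 - q^-1) * t1 / (s1 / 2) in HM'.
have -> : c = - M / (q * a1).
  rewrite /c hs2 /sigma2 /sigma1 /tau /M; field.
  by rewrite s10 q0' gt_eqF.
by rewrite divr_gt0 ?oppr_gt0 // mulr_gt0.
Qed.

Lemma cexpR_inv (z : R[i]) : cexpR (- z) = (cexpR z)^-1.
Proof.
by rewrite -[LHS]mulr1 -(mulfV (cexpR_neq0 z)) mulrA cexpRN mul1r.
Qed.

Lemma cpow_grid k : cpow_abs (xk k) alpha = (cpow_abs a2 alpha * ((c ^+ k)^-1)%:C)%C.
Proof.
elim: k => [|k IH].
  by rewrite /xk expr0 invr1 mul1r rmorph1 mulr1.
rewrite -xkS /cpow_abs gtr0_norm; last by rewrite mulr_gt0 ?invr_gt0 ?xk_pos.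
rewrite lnM ?posrE ?invr_gt0 ?xk_pos // lnV ?posrE //.
rewrite rmorphD rmorphN mulrDr cexpRD mulrN cexpR_inv Hc.
rewrite mulrC.
move: IH; rewrite /cpow_abs gtr0_norm ?xk_pos // => ->.
rewrite -mulrA -fmorphV -rmorphM.
by rewrite exprS [in RHS]invfM [(c^-1 * _)]mulrC.
Qed.


Lemma qpow_lt1 m : (0 < m)%N -> q ^+ m < 1.
Proof. by case: m => // m _; rewrite exprn_ilt1 // ltW. Qed.

Lemma qpow_gt0 m : 0 < q ^+ m.
Proof. exact: exprn_gt0. Qed.

Lemma sqrt_step k : sqrt_qpow q (xk k.+1) = sqrt_qpow q (xk k) * q / xk k.
Proof.
set L := ln (xk k); set l := ln q.
have hl : l != 0 by rewrite /l lt_eqF // ln_lt0 // q0 q1.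
have -> : sqrt_qpow q (xk k) * q / xk k = expR (1/2 * (L/l - 1) * L + l + (- L)).
  by rewrite !expRD expRN /L /l !lnK ?posrE ?xk_pos.
rewrite -xkS /sqrt_qpow lnM ?posrE ?invr_gt0 ?xk_pos // lnV ?posrE // -/L -/l.
congr expR; field; done.
Qed.

Lemma v_pos k : (k <= N)%N -> 0 < vk k.
Proof.
move=> kN; rewrite /vk.
have hc := c_pos.
apply: mulr_gt0; last first.
  apply: qpoch_gt0 => //; first exact: ltW (qpow_gt0 _).
  by apply: qpow_lt1; rewrite subn_gt0.
apply: mulr_gt0; last first.
  apply: qpoch_gt0 => //; first exact: ltW (qpow_gt0 _).
  exact: qpow_lt1.
apply: mulr_gt0; last by rewrite /sqrt_qpow expR_gt0.
by rewrite mulr_gt0 // invr_gt0 exprn_gt0.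
Qed.

Lemma v_ratio k : (k < N)%N ->
  vk k.+1 * (1 - q ^+ k.+1) * c * xk k = vk k * (1 - q ^+ (N - k)).
Proof.
move=> kN.
have eA : qpoch_inf (q ^+ k.+1) q = (1 - q ^+ k.+1) * qpoch_inf (q ^+ k.+2) q.
  rewrite (@qpoch_shift R q q0 q1) -?exprSr //.
    exact: ltW (qpow_gt0 _).
  exact: qpow_lt1.
have eB : qpoch_inf (q ^+ (N - k)) q = (1 - q ^+ (N - k)) * qpoch_inf (q ^+ (N.+1 - k)) q.
  rewrite (@qpoch_shift R q q0 q1) -?exprSr ?subSn //; try exact: ltnW.
    exact: ltW (qpow_gt0 _).
  exact: qpow_lt1.
have hc := c_pos.
rewrite /vk sqrt_step eA (_ : (N.+1 - k.+1 = N - k)%N) // eB.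
have hx := xk_pos k.
rewrite !exprS. field.
by rewrite !gt_eqF // ?exprn_gt0.
Qed.

Lemma balance k : (k < N)%N ->
  vk k * sigma1 s1 a1 (xk k) = vk k.+1 * sigma2 q s1 a1 t0 t1 (xk k.+1).
Proof.
move=> kN.
have hc := c_pos.
have hx := xk_pos k.
have h1 : 1 - q ^+ k.+1 != 0 by rewrite subr_eq0 eq_sym lt_eqF // qpow_lt1.
have hv : vk k.+1 = vk k * (1 - q ^+ (N - k)) / ((1 - q ^+ k.+1) * c * xk k).
  rewrite -v_ratio //; field.
  by rewrite h1 !gt_eqF.
rewrite hv Hs2 -xkS /sigma1 /c -xkN /xk (expfB _ kN).
move: h1; rewrite exprS => h1.
field.
by rewrite h1 s10 s20 q0' (gt_eqF a20) !gt_eqF ?exprn_gt0.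
Qed.

Definition Lop (f : R -> R) (x : R) : R :=
  q ^+ 2 * sigma1 s1 a1 x / ((1 - q) ^+ 2 * x ^+ 2) * (f (q^-1 * x) - f x)
  + sigma2 q s1 a1 t0 t1 x / ((1 - q) ^+ 2 * x ^+ 2) * (f (q * x) - f x).

Lemma qEHT_Lop n f x : x != 0 -> qEHT q s1 a1 t0 t1 n f ->
  Lop f x = - lambda q s1 t1 n * f x.
Proof.
move=> x0 /(_ x); rewrite /qD.
have xq0 : q^-1 * x != 0 by rewrite mulf_neq0 // invr_eq0.
have e : q * (q^-1 * x) = x by rewrite mulrA (mulfV q0') mul1r.
rewrite x0 xq0 /= e => H.
rewrite -[LHS]subr0 -[X in _ - X = _]H /Lop /sigma2.
field.
have qi1 : 1 - q^-1 != 0.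
  rewrite subr_eq0 eq_sym; apply: contraTneq q1 => /(congr1 GRing.inv).
  by rewrite invrK invr1 => ->; rewrite ltxx.
by rewrite x0 q0' q1' subr_eq0 (lt_eqF q1).
Qed.

Lemma Lop_grid f k : Lop f (xk k) =
  q ^+ 2 * sigma1 s1 a1 (xk k) / ((1 - q) ^+ 2 * xk k ^+ 2) * (f (xk k.+1) - f (xk k))
  + sigma2 q s1 a1 t0 t1 (xk k) / ((1 - q) ^+ 2 * xk k ^+ 2) * (f (q * xk k) - f (xk k)).
Proof. by rewrite /Lop xkS. Qed.

Lemma Lop_sum f g : \sum_(k < N.+1) vk k * Lop f (xk k) * g (xk k)
  = - \sum_(k < N) vk k * (q ^+ 2 * sigma1 s1 a1 (xk k) / ((1 - q) ^+ 2 * xk k ^+ 2))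
       * (f (xk k.+1) - f (xk k)) * (g (xk k.+1) - g (xk k)).
Proof.
under eq_bigr do rewrite Lop_grid.
apply: (tele N vk (fun k => q ^+ 2 * sigma1 s1 a1 (xk k) / ((1 - q) ^+ 2 * xk k ^+ 2))
   (fun k => sigma2 q s1 a1 t0 t1 (xk k) / ((1 - q) ^+ 2 * xk k ^+ 2))
   (fun k => f (xk k)) (fun k => f (q * xk k)) (fun k => g (xk k))).
- by rewrite /= Hs2 /xk expr0 invr1 mul1r subrr !mulr0 mul0r.
- by rewrite /= xkN /sigma1 subrr !mulr0 mul0r.
- move=> k kN /=.
  have hx := xk_pos k.
  rewrite [LHS](_ : _ = vk k * sigma1 s1 a1 (xk k) * (q ^+ 2 / ((1 - q) ^+ 2 * xk k ^+ 2))); last first.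
    by field; rewrite q1' gt_eqF.
  rewrite balance // -xkS; field.
  by rewrite q1' q0' gt_eqF.
- by move=> k /=; rewrite xkS'.
Qed.

Lemma Lop_sym f g : \sum_(k < N.+1) vk k * Lop f (xk k) * g (xk k)
  = \sum_(k < N.+1) vk k * f (xk k) * Lop g (xk k).
Proof.
rewrite Lop_sum.
rewrite (eq_bigr (fun k : 'I_N.+1 => vk k * Lop g (xk k) * f (xk k))); last first.
  by move=> i _; rewrite mulrAC.
rewrite Lop_sum; congr (- _); apply: eq_bigr => i _; ring.
Qed.

Definition Sg (f g : R -> R) := \sum_(k < N.+1) vk k * f (xk k) * g (xk k).

Lemma orth f g lf lg :
  (forall k, (k <= N)%N -> Lop f (xk k) = - lf * f (xk k)) ->
  (forall k, (k <= N)%N -> Lop g (xk k) = - lg * g (xk k)) ->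
  lf != lg -> Sg f g = 0.
Proof.
move=> hf hg hl.
have := Lop_sym f g.
rewrite (eq_bigr (fun k : 'I_N.+1 => - lf * (vk k * f (xk k) * g (xk k)))); last first.
  by move=> i _; rewrite (hf i (ltn_ord i)); ring.
rewrite [RHS](eq_bigr (fun k : 'I_N.+1 => - lg * (vk k * f (xk k) * g (xk k)))); last first.
  by move=> i _; rewrite (hg i (ltn_ord i)); ring.
rewrite -!mulr_sumr -/(Sg f g) => /eqP.
rewrite -subr_eq0 -mulrBl mulf_eq0 => /orP [|/eqP //].
by rewrite subr_eq0 eqr_opp (negbTE hl).
Qed.

Lemma Sg_pos (p : {poly R}) : p != 0 -> (size p <= N.+1)%N ->
  0 < Sg (horner p) (horner p).
Proof.
move=> p0 sp.
have ge : forall k : 'I_N.+1, true -> 0 <= vk k * p.[xk k] * p.[xk k].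
  move=> k _; rewrite -mulrA; apply: mulr_ge0; last by rewrite -expr2 sqr_ge0.
  by apply: ltW; apply: (v_pos _ (ltn_ord k)).
rewrite /Sg lt0r (sumr_ge0 _ ge) andbT.
apply/negP => /eqP H.
have H0 := psumr_eq0P ge H.
have : all (root p) [seq xk (val k) | k <- enum 'I_N.+1].
  apply/allP => y /mapP [k _ ->]; rewrite /root.
  have := H0 k isT.
  move/eqP; rewrite -mulrA mulf_eq0 (gt_eqF (v_pos _ (ltn_ord k))) /=.
  by rewrite mulf_eq0 orbb.
move/(max_poly_roots p0) => /(_ _).
have -> : uniq [seq xk (val k) | k <- enum 'I_N.+1].
  rewrite map_inj_uniq ?enum_uniq // => i j /eqP.
  rewrite /xk (inj_eq (mulIf (negbT (gt_eqF a20)))) (inj_eq (@invr_inj _)).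
  move/eqP/(ieexprIn q0 (negbT (lt_eqF q1))) => ij; exact: val_inj.
move=> /(_ isT); rewrite size_map size_enum_ord => h.
by move: (leq_ltn_trans sp h); rewrite ltnn.
Qed.


Lemma rho_grid k : (k <= N)%N ->
  rho q a2 (q^-1 * a1) alpha (xk k) = cpow_abs a2 alpha *
    ((c ^+ k)^-1 * sqrt_qpow q (xk k) * qpoch_inf (q ^+ k.+1) q
       * qpoch_inf (q ^+ (N.+1 - k)) q)%:C.
Proof.
move=> kN.
by rewrite /rho cpow_grid qa_over (over_b _ kN) -mulrA -!rmorphM !mulrA.
Qed.

Lemma jackson_Sg (f g : R -> R) :
  jackson_qinv q a2 N (fun x => (f x)%:C * (g x)%:C * rho q a2 (q^-1 * a1) alpha x)
  = ((q^-1 - 1) * a2)%:C * cpow_abs a2 alpha * (Sg f g)%:C.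
Proof.
rewrite /jackson_qinv -mulrA; congr (_ * _).
rewrite /Sg rmorph_sum mulr_sumr; apply: eq_bigr => k _.
change (q ^- k * a2) with (xk k).
rewrite (rho_grid _ (ltn_ord k)) /vk !rmorphM.
ring.
Qed.

Lemma main_G :
  exists (P : nat -> {poly R}) (d : nat -> R[i]),
    (forall n : nat, (n <= N)%N ->
       [/\ size (P n) = n.+1,
           qEHT q s1 a1 t0 t1 n (fun x => (P n).[x]) & d n != 0]) /\
    (forall m n : nat, (m <= N)%N -> (n <= N)%N ->
       jackson_qinv q a2 N
         (fun x => ((P n).[x]%:C * (P m).[x]%:C
                    * rho q a2 (q^-1 * a1) alpha x)%C)
       = if m == n then d n else 0).
Proof.
have qn1 : q != 1 by rewrite lt_eqF.
have hl : forall i n, i != n -> lambda q s1 t1 i != lambda q s1 t1 n.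
  by move=> i n; apply: lambda_neq.
have hE : forall n, qEHT q s1 a1 t0 t1 n (fun x => (Pn q s1 a1 t0 t1 n).[x]).
  move=> n; apply: qEHT_poly => //; apply: Pn_cond => i lin.
  by apply: hl; rewrite neq_ltn lin.
pose d n := jackson_qinv q a2 N (fun x => ((Pn q s1 a1 t0 t1 n).[x]%:C
   * (Pn q s1 a1 t0 t1 n).[x]%:C * rho q a2 (q^-1 * a1) alpha x)%C).
exists (Pn q s1 a1 t0 t1), d; split.
  move=> n nN; split => //; first exact: size_Pn.
  rewrite /d jackson_Sg !mulf_eq0 !negb_or !fmorph_eq0.
  rewrite -andbA; apply/and3P; split.
  - apply: mulf_neq0; last by rewrite gt_eqF.
    by rewrite subr_eq0 gt_eqF // invf_gt1.
  - exact: cexpR_neq0.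
  - rewrite gt_eqF //; apply: Sg_pos.
      by rewrite -size_poly_eq0 size_Pn.
    by rewrite size_Pn.
move=> m n mN nN; case: (eqVneq m n) => [->|mn]; first by [].
rewrite jackson_Sg (orth _ _ (lambda q s1 t1 n) (lambda q s1 t1 m)).
- by rewrite rmorph0 mulr0.
- by move=> k kN; apply: qEHT_Lop => //; rewrite gt_eqF // xk_pos.
- by move=> k kN; apply: qEHT_Lop => //; rewrite gt_eqF // xk_pos.
- by apply: hl; rewrite eq_sym.
Qed.

End G.

Theorem theorem4p12 (R : realType) (q s1 a1 t0 t1 s2 a2 : R) (N : nat)
    (alpha : R[i]) :
  0 < q -> q < 1 ->
  (* standing assumption tau'(0) <> 0, and sigma_1''(0) <> 0 *)
  t1 != 0 -> s1 != 0 ->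
  (* sigma_2(x) = 1/2 sigma_2''(0) x (x - a2), sigma_2''(0) = s2 <> 0 *)
  s2 != 0 ->
  (forall x : R, sigma2 q s1 a1 t0 t1 x = s2 / 2 * x * (x - a2)) ->
  0 < a2 -> a2 < a1 ->
  (* q y_0 < 0  and  q^2 Lambda_q < 0 *)
  q * (q^-1 * (1 - (1 - q^-1) / a1 * (t0 / (s1 / 2)))) < 0 ->
  q ^+ 2 * (q ^- 2 * (1 + (1 - q^-1) * t1 / (s1 / 2))) < 0 ->
  (* a = a2, b = q^{-1} a1, and q^{-N-1} a = b *)
  q ^- N.+1 * a2 = q^-1 * a1 ->
  (* q^alpha = - q^{-3} sigma_2''(0) / (sigma_1''(0) b) *)
  cexpR (alpha * (ln q)%:C)%C = (- (q ^- 3 * s2) / (s1 * (q^-1 * a1)))%:C ->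
  exists (P : nat -> {poly R}) (d : nat -> R[i]),
    (forall n : nat, (n <= N)%N ->
       [/\ size (P n) = n.+1,
           qEHT q s1 a1 t0 t1 n (fun x => (P n).[x]) & d n != 0]) /\
    (forall m n : nat, (m <= N)%N -> (n <= N)%N ->
       jackson_qinv q a2 N
         (fun x => ((P n).[x]%:C * (P m).[x]%:C
                    * rho q a2 (q^-1 * a1) alpha x)%C)
       = if m == n then d n else 0).
Proof.
move=> q0 q1 _ s10 s20 Hs2 a20 a12 _ HL HN Hc.
have HM : 1 + (1 - q^-1) * t1 / (s1 / 2) < 0.
  move: HL; rewrite mulrA mulfV ?mul1r //; exact: expf_neq0 (lt0r_neq0 q0).
exact: (@main_G R q s1 a1 t0 t1 s2 a2 N alpha q0 q1 s10 s20 Hs2 a20 a12 HM HN Hc).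
Qed.
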